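(* Let $\alpha\le\omega_1$. 1) For every $B\in\mathcal B_\alpha$: (i) $D_{\mathrm{iie}}^{\alpha'}(B)$ is finite; (ii) if $\alpha$ is even, $D_{\mathrm{iie}}^{\alpha'}(B)$ is either empty or equal to $\{\emptyset\}$. 2) For every $A\in\mathcal A_\alpha$: (i) $D_{\mathrm{iie}}^{\alpha'}(D_{\mathrm{iie}}(A))$ is finite; (ii) if $\alpha$ is even, $D_{\mathrm{iie}}^{\alpha'}(D_{\mathrm{iie}}(A))$ is either empty or equal to $\{\emptyset\}$.
   Context: $\omega^{<\omega}$ finite sequences of naturals, $s^\frown t$ concatenation (also for $t\in\omega^\omega$), $h^\frown B=\{h^\frown s:s\in B\}$. For $S\subset\omega^{<\omega}\cup\omega^\omega$, $\mathrm{cl}_{\mathrm{Tr}}(S)$ is the set of finite initial segments of elements of $S$. For a tree $T$, $D_{\mathrm{iie}}(T)=\{t\in T: T$ contains infinitely many pairwise incomparable extensions of $t$ of pairwise different lengths$\}$; for any $S$, $D_{\mathrm{iie}}(S)=D_{\mathrm{iie}}(\mathrm{cl}_{\mathrm{Tr}}(S))$, $D^0_{\mathrm{iie}}(S)=\mathrm{cl}_{\mathrm{Tr}}(S)$, $D^{\beta+1}_{\mathrm{iie}}=D_{\mathrm{iie}}\circ D^\beta_{\mathrm{iie}}$, $D^\lambda_{\mathrm{iie}}(S)=\bigcap_{\beta<\lambda}D^\beta_{\mathrm{iie}}(S)$ for limit $\lambda$. For $\alpha=\lambda+2n+i$ ($\lambda$ limit or 0, $n\in\omega$, $i\in\{0,1\}$),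 $\alpha'=\lambda+n$; parity of $\alpha$ is that of $i$ (so $\omega_1$ is even, $\omega_1'=\omega_1$). A forking sequence is a sequence $(f_n)_{n\in\omega}$ of nonempty elements of $\omega^{<\omega}$ with $f_n(0)\ne f_m(0)$ for $n\ne m$. Finite broom sets: $\mathcal B_0=\{\{\emptyset\}\}$; for $1\le\alpha<\omega_1$ odd, $\mathcal B_\alpha=\mathcal B_{<\alpha}\cup\{h^\frown B: B\in\mathcal B_{\alpha-1},h\in\omega^{<\omega}\}$; for $0<\alpha<\omega_1$ even, $\mathcal B_\alpha=\mathcal B_{<\alpha}\cup\{\bigcup_nf_n^\frown B_n: B_n\in\mathcal B_{<\alpha},(f_n)$ forking$\}$, where $\mathcal B_{<\alpha}=\bigcup_{\beta<\alpha}\mathcal B_\beta$; $\mathcal B_{\omega_1}=\bigcup_{\alpha<\omega_1}\mathcal B_\alpha$. A countable set $A\subset\omega^\omega$ is a broom-extension of $B\in\mathcal B_{\omega_1}$ if $A=\{s^\frown f^s_n{}^\frown\nu^s_n: s\in B,n\in\omega\}$ for some forking sequences $(f^s_n)_n$, $s\in B$, and some $\nu^s_n\in\omega^\omega$. $\mathcal A_\alpha$ is the set of broom-extensions of elements of $\mathcal B_\alpha$. *)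

(* Defs.v *)
From Stdlib Require Import Arith List.
Import ListNotations.

(* omega^{<omega} = list nat ; omega^omega = nat -> nat ;
   subsets are predicates. *)

Definition prefix (t s : list nat) : Prop := exists u, s = t ++ u.

Definition prefix_inf (t : list nat) (x : nat -> nat) : Prop :=
  forall i, i < length t -> nth i t 0 = x i.

Definition incomparable (a b : list nat) : Prop := ~ prefix a b /\ ~ prefix b a.

Definition app_inf (s : list nat) (y : nat -> nat) : nat -> nat :=
  fun i => if i <? length s then nth i s 0 else y (i - length s).

Definition clTr (S : list nat -> Prop) : list nat -> Prop :=
  fun t => exists s, S s /\ prefix t s.
Definition clTr_inf (A : (nat -> nat) -> Prop) : list nat -> Prop :=
  fun t => exists x, A x /\ prefix_inf t x.

Definition Diie_tree (T : list nat -> Prop) : list nat -> Prop :=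
  fun t => T t /\
    exists g : nat -> list nat,
      (forall n, T (g n) /\ prefix t (g n)) /\
      (forall n m, n <> m -> incomparable (g n) (g m) /\ length (g n) <> length (g m)).

Definition Diie (S : list nat -> Prop) : list nat -> Prop := Diie_tree (clTr S).
Definition Diie_inf (A : (nat -> nat) -> Prop) : list nat -> Prop := Diie_tree (clTr_inf A).

Definition finite_set (P : list nat -> Prop) : Prop :=
  exists l : list (list nat), forall s, P s -> In s l.

Definition empty_or_root (P : list nat -> Prop) : Prop :=
  (forall s, ~ P s) \/ (forall s, P s <-> s = []).

(* We model the ordinals <= omega_1 by an arbitrary strict well-order
   (O, lt) of order type omega_1 + 1: it has a greatest element w, every
   element below w has countably many predecessors, and w has uncountably
   many predecessors.  This determines (O, lt) up to isomorphism. *)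

Definition countable_below {O : Type} (lt : O -> O -> Prop) (b : O) : Prop :=
  exists e : nat -> O, forall c, lt c b -> exists n, e n = c.

Definition is_top {O : Type} (lt : O -> O -> Prop) (w : O) : Prop :=
  forall b, b = w \/ lt b w.

Definition IsOmega1Plus1 {O : Type} (lt : O -> O -> Prop) : Prop :=
  (forall a, ~ lt a a) /\
  (forall a b c, lt a b -> lt b c -> lt a c) /\
  (forall a b, lt a b \/ a = b \/ lt b a) /\
  well_founded lt /\
  exists w, is_top lt w /\
            (forall b, lt b w -> countable_below lt b) /\
            ~ countable_below lt w.

Section Ord.
Context {O : Type} (lt : O -> O -> Prop).

Definition is_zero (a : O) : Prop := forall b, ~ lt b a.
Definition is_succ_of (b a : O) : Prop := lt b a /\ forall c, ~ (lt b c /\ lt c a).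
Definition is_limit (a : O) : Prop := ~ is_zero a /\ ~ exists b, is_succ_of b a.

Fixpoint succn (l : O) (k : nat) (a : O) : Prop :=
  match k with
  | 0 => a = l
  | S k => exists b, succn l k b /\ is_succ_of b a
  end.

Definition prime_of (a a' : O) : Prop :=
  exists l n i, (is_zero l \/ is_limit l) /\ i < 2 /\
    succn l (2 * n + i) a /\ succn l n a'.

Definition is_even (a : O) : Prop :=
  exists l n, (is_zero l \/ is_limit l) /\ succn l (2 * n) a.
Definition is_odd (a : O) : Prop :=
  exists l n, (is_zero l \/ is_limit l) /\ succn l (2 * n + 1) a.

Definition IsDiter (S : list nat -> Prop) (F : O -> list nat -> Prop) : Prop :=
  forall b,
    (is_zero b -> forall t, F b t <-> clTr S t) /\
    (forall c, is_succ_of c b -> forall t, F b t <-> Diie (F c) t) /\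
    (is_limit b -> forall t, F b t <-> forall c, lt c b -> F c t).

(* D^a_iie(S): the value at a of the (unique) iteration family *)
Definition Dpow (S : list nat -> Prop) (a : O) : list nat -> Prop :=
  fun t => forall F, IsDiter S F -> F a t.

Definition forking (f : nat -> list nat) : Prop :=
  (forall n, f n <> []) /\
  (forall n m, n <> m -> hd 0 (f n) <> hd 0 (f m)).

Definition IsBroom (Bf : O -> (list nat -> Prop) -> Prop) : Prop :=
  forall a (B : list nat -> Prop),
    (is_zero a -> (Bf a B <-> forall s, B s <-> s = [])) /\
    (forall c, is_odd a -> is_succ_of c a ->
       (Bf a B <->
         (exists b, lt b a /\ Bf b B) \/
         (exists h B', Bf c B' /\ forall s, B s <-> exists s', B' s' /\ s = h ++ s'))) /\
    (is_even a -> ~ is_zero a -> ~ is_top lt a ->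
       (Bf a B <->
         (exists b, lt b a /\ Bf b B) \/
         (exists (f : nat -> list nat) (Bn : nat -> list nat -> Prop),
            forking f /\ (forall n, exists b, lt b a /\ Bf b (Bn n)) /\
            forall s, B s <-> exists n s', Bn n s' /\ s = f n ++ s'))) /\
    (is_top lt a -> (Bf a B <-> exists b, lt b a /\ Bf b B)).

Definition Broom (a : O) (B : list nat -> Prop) : Prop :=
  forall Bf, IsBroom Bf -> Bf a B.

Definition BroomExt (B : list nat -> Prop) (A : (nat -> nat) -> Prop) : Prop :=
  exists (f : list nat -> nat -> list nat) (nu : list nat -> nat -> nat -> nat),
    (forall s, B s -> forking (f s)) /\
    forall x, A x <-> exists s n, B s /\ forall i, x i = app_inf (s ++ f s n) (nu s n) i.

Definition BroomA (a : O) (A : (nat -> nat) -> Prop) : Prop :=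
  exists B, Broom a B /\ BroomExt B A.

End Ord.

(* Main.v *)
Require Import Defs.
From Stdlib Require Import Arith List Lia FinFun Classical ClassicalEpsilon.
Import ListNotations.

Lemma prefix_refl t : prefix t t.
Proof. exists []. now rewrite app_nil_r. Qed.
Lemma prefix_trans a b c : prefix a b -> prefix b c -> prefix a c.
Proof. intros [u ->] [v ->]. exists (u ++ v). now rewrite app_assoc. Qed.
Lemma prefix_app t u : prefix t (t ++ u).
Proof. now exists u. Qed.
Lemma prefix_nil s : prefix [] s.
Proof. now exists s. Qed.
Lemma prefix_len t s : prefix t s -> length t <= length s.
Proof. intros [u ->]. rewrite length_app. lia. Qed.
Lemma prefix_comp t u s : prefix t s -> prefix u s -> prefix t u \/ prefix u t.
Proof.
  intros [r Hr] [r' Hr']. rewrite Hr' in Hr.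
  destruct (app_eq_app _ _ _ _ Hr) as [l [[H1 H2]|[H1 H2]]].
  - left. now exists l.
  - right. now exists l.
Qed.
Lemma prefix_nil_inv t : prefix t [] -> t = [].
Proof. intros [u H]. now destruct t. Qed.
Lemma prefix_app_inv h u v : prefix (h ++ u) (h ++ v) -> prefix u v.
Proof. intros [r Hr]. exists r. rewrite <- app_assoc in Hr. now apply app_inv_head in Hr. Qed.
Lemma prefix_app_mono h u v : prefix u v -> prefix (h ++ u) (h ++ v).
Proof. intros [r ->]. exists r. now rewrite app_assoc. Qed.
Lemma prefix_decomp h s : prefix h s -> s = h ++ skipn (length h) s.
Proof. intros [r ->]. rewrite skipn_app, skipn_all, Nat.sub_diag. simpl. reflexivity. Qed.

Lemma prefix_skipn k t s : prefix t s -> prefix (skipn k t) (skipn k s).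
Proof. intros [r ->]. rewrite skipn_app. apply prefix_app. Qed.

Lemma K_lem h s t : prefix t (h ++ s) ->
  prefix (skipn (length h) t) s /\ prefix t (h ++ skipn (length h) t).
Proof.
  intros [r Hr].
  destruct (app_eq_app _ _ _ _ Hr) as [l [[H1 H2]|[H1 H2]]].
  - subst h. rewrite length_app, skipn_all2 by lia. split. apply prefix_nil.
    rewrite app_nil_r. apply prefix_app.
  - subst t. rewrite skipn_app, skipn_all, Nat.sub_diag. simpl. split.
    + subst s. apply prefix_app.
    + apply prefix_refl.
Qed.

Lemma hd_prefix t s : t <> [] -> prefix t s -> hd 0 t = hd 0 s.
Proof. intros H [r ->]. destruct t; [congruence|reflexivity]. Qed.

Definition prefixes (s : list nat) : list (list nat) :=
  map (fun i => firstn i s) (seq 0 (S (length s))).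

Lemma in_prefixes t s : prefix t s -> In t (prefixes s).
Proof.
  intros [r ->]. unfold prefixes. apply in_map_iff. exists (length t). split.
  - rewrite <- (Nat.add_0_r (length t)), firstn_app_2. simpl. now rewrite app_nil_r.
  - apply in_seq. rewrite length_app. lia.
Qed.

Lemma finite_sub (X Y : list nat -> Prop) : (forall t, X t -> Y t) -> finite_set Y -> finite_set X.
Proof. intros H [l Hl]. exists l. auto. Qed.

Lemma Diie_finite_empty X : finite_set X -> forall t, ~ Diie X t.
Proof.
  intros [l Hl] t [_ [g [Hg Hinc]]].
  set (L := flat_map prefixes l).
  assert (Hin : forall k, In (g k) L).
  { intro k. destruct (Hg k) as [[s [Hs Hp]] _]. unfold L. apply in_flat_map.
    exists s. split; auto. now apply in_prefixes. }
  assert (Hinj : Injective g).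
  { intros n m E. destruct (Nat.eq_dec n m); auto. destruct (Hinc n m n0) as [_ Hl'].
    rewrite E in Hl'. congruence. }
  assert (HN := @NoDup_incl_length _ (map g (seq 0 (S (length L)))) L
    (Injective_map_NoDup Hinj (seq_NoDup _ _))).
  rewrite length_map, length_seq in HN.
  assert (S (length L) <= length L); [|lia].
  apply HN. intros x Hx. apply in_map_iff in Hx. destruct Hx as [k [<- _]]. apply Hin.
Qed.

Lemma Diie_mono (X Y : list nat -> Prop) : (forall t, X t -> Y t) -> forall t, Diie X t -> Diie Y t.
Proof.
  intros H t [[s [Hs Hp]] [g [Hg Hinc]]]. split.
  - exists s; auto.
  - exists g. split; auto. intro n. destruct (Hg n) as [[s' [Hs' Hp']] Hq].
    split; auto. exists s'; auto.
Qed.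

Lemma Diie_closed X s t : Diie X s -> prefix t s -> Diie X t.
Proof.
  intros [[u [Hu Hp]] [g [Hg Hinc]]] Hts. split.
  - exists u. split; auto. eapply prefix_trans; eauto.
  - exists g. split; auto. intro n. destruct (Hg n). split; auto. eapply prefix_trans; eauto.
Qed.

Lemma Hs_lem h (X : list nat -> Prop) t (g : nat -> list nat) :
  (forall k, prefix t (g k)) ->
  (forall n m, n <> m -> incomparable (g n) (g m) /\ length (g n) <> length (g m)) ->
  (forall k, exists w, X w /\ prefix (g k) (h ++ w)) ->
  Diie X (skipn (length h) t) /\ prefix t (h ++ skipn (length h) t).
Proof.
  intros Ht Hinc Hw.
  assert (Hh : forall k, prefix h (g k)).
  { intro k. destruct (Hw k) as [w [_ Hk]].
    destruct (prefix_comp _ _ _ Hk (prefix_app h w)) as [Hkh|Hhk]; auto.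
    exfalso. destruct (Hw (S k)) as [w' [_ Hk']].
    assert (Hne : k <> S k) by lia.
    destruct (Hinc _ _ Hne) as [[Hi1 Hi2] _].
    destruct (prefix_comp _ _ _ Hk' (prefix_app h w')) as [H1|H1].
    - destruct (prefix_comp _ _ _ Hkh H1); contradiction.
    - apply Hi1. eapply prefix_trans; eauto. }
  set (g' := fun k => skipn (length h) (g k)).
  assert (Hg : forall k, g k = h ++ g' k) by (intro k; now apply prefix_decomp).
  assert (Hpt : prefix t (h ++ skipn (length h) t)).
  { destruct (Ht 0) as [r Hr]. rewrite (Hg 0) in Hr.
    apply (K_lem h (g' 0)). rewrite <- Hg. apply Ht. }
  split; auto.
  split.
  - destruct (Hw 0) as [w [Hw1 Hw2]]. exists w. split; auto.
    eapply prefix_trans. apply (prefix_skipn (length h)), (Ht 0).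
    apply (K_lem h w). auto.
  - exists g'. split.
    + intro k. split.
      * destruct (Hw k) as [w [Hw1 Hw2]]. exists w. split; auto. apply (K_lem h w). auto.
      * apply prefix_skipn, Ht.
    + intros n m Hnm. destruct (Hinc n m Hnm) as [[H1 H2] H3].
      rewrite (Hg n), (Hg m) in H1, H2, H3. rewrite !length_app in H3.
      repeat split.
      * intro C. apply H1. now apply prefix_app_mono.
      * intro C. apply H2. now apply prefix_app_mono.
      * lia.
Qed.

Section Ords.
Variable O : Type.
Variable lt : O -> O -> Prop.
Hypothesis irr : forall a, ~ lt a a.
Hypothesis trans : forall a b c, lt a b -> lt b c -> lt a c.
Hypothesis tri : forall a b, lt a b \/ a = b \/ lt b a.
Hypothesis wf : well_founded lt.

Definition le x y := x = y \/ lt x y.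
Definition zl l := is_zero lt l \/ is_limit lt l.

Lemma asym a b : lt a b -> lt b a -> False.
Proof. intros. apply (irr a). eauto. Qed.

Lemma succ_uniq1 b b' a : is_succ_of lt b a -> is_succ_of lt b' a -> b = b'.
Proof.
  intros [H1 H2] [H3 H4]. destruct (tri b b') as [H|[H|H]]; auto.
  - exfalso. apply (H2 b'). auto.
  - exfalso. apply (H4 b). auto.
Qed.

Lemma succ_uniq2 b a a' : is_succ_of lt b a -> is_succ_of lt b a' -> a = a'.
Proof.
  intros [H1 H2] [H3 H4]. destruct (tri a a') as [H|[H|H]]; auto.
  - exfalso. apply (H4 a). auto.
  - exfalso. apply (H2 a'). auto.
Qed.

Lemma zl_nosucc l b : zl l -> ~ is_succ_of lt b l.
Proof.
  intros [Hz|[_ Hl]] Hs.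
  - apply (Hz b). apply Hs.
  - apply Hl. eauto.
Qed.

Lemma succn_pos l k a : succn lt l (S k) a -> exists b, succn lt l k b /\ is_succ_of lt b a.
Proof. simpl. auto. Qed.

Lemma succn_uniq l k a a' : succn lt l k a -> succn lt l k a' -> a = a'.
Proof.
  revert a a'. induction k; simpl; intros a a' H1 H2.
  - congruence.
  - destruct H1 as [b [Hb Hs]]. destruct H2 as [b' [Hb' Hs']].
    rewrite (IHk _ _ Hb Hb') in Hs. eapply succ_uniq2; eauto.
Qed.

Lemma succn_sub l k a : succn lt l k a -> forall j, j <= k ->
  exists b, succn lt l j b /\ (j = k -> b = a) /\ (j < k -> lt b a).
Proof.
  revert a. induction k; intros a Ha j Hj.
  - exists a. assert (j = 0) by lia. subst. repeat split; auto. lia.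
  - destruct (Nat.eq_dec j (S k)).
    + subst. exists a. repeat split; auto. lia.
    + destruct Ha as [c [Hc Hs]]. destruct (IHk c Hc j ltac:(lia)) as [b [Hb [E1 E2]]].
      exists b. repeat split; auto. lia. intros _.
      destruct (Nat.eq_dec j k).
      * rewrite (E1 e). apply Hs.
      * eapply trans. apply E2. lia. apply Hs.
Qed.

Lemma succn_lt l j k b a : succn lt l j b -> succn lt l k a -> j < k -> lt b a.
Proof.
  intros Hb Ha Hjk. destruct (succn_sub l k a Ha j ltac:(lia)) as [b' [Hb' [_ E]]].
  rewrite (succn_uniq _ _ _ _ Hb Hb'). auto.
Qed.

Lemma succn_le l j k b a : succn lt l j b -> succn lt l k a -> j <= k -> le b a.
Proof.
  intros Hb Ha Hjk. destruct (Nat.eq_dec j k).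
  - subst. left. eapply succn_uniq; eauto.
  - right. eapply succn_lt; eauto. lia.
Qed.

Lemma succn_decomp_uniq l k l2 k2 a : zl l -> zl l2 -> succn lt l k a -> succn lt l2 k2 a ->
  l = l2 /\ k = k2.
Proof.
  intros Hl Hl2. revert a k2. induction k; intros a k2 H1 H2.
  - simpl in H1. subst. destruct k2.
    + simpl in H2. split; congruence.
    + destruct H2 as [b [_ Hs]]. exfalso. eapply zl_nosucc. exact Hl. exact Hs.
  - destruct H1 as [b [Hb Hs]]. destruct k2.
    + simpl in H2. subst. exfalso. eapply zl_nosucc. exact Hl2. exact Hs.
    + destruct H2 as [b2 [Hb2 Hs2]]. rewrite <- (succ_uniq1 _ _ _ Hs Hs2) in Hb2.
      destruct (IHk _ _ Hb Hb2). split; congruence.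
Qed.

Lemma not_even_odd a : is_even lt a -> is_odd lt a -> False.
Proof.
  intros [l [n [Hl H1]]] [l2 [n2 [Hl2 H2]]].
  destruct (succn_decomp_uniq _ _ _ _ _ Hl Hl2 H1 H2). lia.
Qed.

Lemma odd_succ a : is_odd lt a -> exists b, is_succ_of lt b a.
Proof.
  intros [l [n [_ H]]]. rewrite Nat.add_1_r in H. destruct H as [b [_ Hb]]. eauto.
Qed.

Lemma succn_between l k a x : succn lt l k a -> le l x -> le x a -> exists r, r <= k /\ succn lt l r x.
Proof.
  revert a. induction k; intros a Ha Hlx Hxa.
  - simpl in Ha. subst. exists 0. split; auto. simpl.
    destruct Hlx as [->|H1]; auto. destruct Hxa as [->|H2]; auto. exfalso. eapply asym; eauto.
  - destruct Hxa as [->|Hxa]. exists (S k). auto.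
    destruct Ha as [c [Hc Hs]].
    assert (le x c).
    { destruct (tri x c) as [H|[H|H]]. right; auto. left; auto.
      exfalso. apply (proj2 Hs x). auto. }
    destruct (IHk c Hc Hlx H) as [r [Hr1 Hr2]]. exists r. split; auto.
Qed.

Lemma decomp_exists a : exists l k, zl l /\ succn lt l k a.
Proof.
  induction a as [a IH] using (well_founded_ind wf).
  destruct (classic (is_zero lt a)) as [Hz|Hz].
  - exists a, 0. split. left; auto. reflexivity.
  - destruct (classic (exists b, is_succ_of lt b a)) as [[b Hb]|Hn].
    + destruct (IH b (proj1 Hb)) as [l [k [Hl Hk]]]. exists l, (S k). split; auto.
      exists b. auto.
    + exists a, 0. split. right. split; auto. reflexivity.
Qed.

Lemma prime_exists a : exists a', prime_of lt a a'.
Proof.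
  destruct (decomp_exists a) as [l [k [Hl Hk]]].
  assert (E := Nat.div_mod k 2 ltac:(lia)).
  assert (M := Nat.mod_upper_bound k 2 ltac:(lia)).
  destruct (succn_sub l k a Hk (k/2) ltac:(lia)) as [a' [Ha' _]].
  exists a', l, (k/2), (k mod 2). repeat split; auto. now rewrite <- E.
Qed.

Lemma below_zl l : zl l -> forall m p b, zl m -> succn lt m p b -> lt m l -> lt b l.
Proof.
  intros Hl m p b Hm Hb Hml.
  destruct (tri b l) as [H|[H|H]]; auto; exfalso.
  - subst. destruct p. simpl in Hb. subst. eapply irr; eauto.
    destruct Hb as [c [_ Hc]]. exact (zl_nosucc _ _ Hl Hc).
  - destruct (succn_between m p b l Hb (or_intror Hml) (or_intror H)) as [r [_ Hr]].
    destruct r. simpl in Hr. subst. eapply irr; eauto.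
    destruct Hr as [c [_ Hc]]. exact (zl_nosucc _ _ Hl Hc).
Qed.

Lemma D_lem a a' b b' : prime_of lt a a' -> prime_of lt b b' -> lt b a ->
  le b' a' /\ (is_even lt a -> lt b' a').
Proof.
  intros [l [n [i [Hl [Hi [Ha Ha']]]]]] [m [p [j [Hm [Hj [Hb Hb']]]]]] Hba.
  assert (Hev : is_even lt a -> i = 0).
  { intros [l2 [n2 [Hl2 H2]]]. destruct (succn_decomp_uniq _ _ _ _ _ Hl Hl2 Ha H2). lia. }
  destruct (tri m l) as [Hml|[<-|Hlm]].
  - assert (Hbl : lt b l) by (eapply below_zl; eauto).
    assert (Hbb : le b' b) by (eapply succn_le; eauto; lia).
    assert (Hla : le l a') by (eapply succn_le with (j := 0); eauto; [reflexivity|lia]).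
    assert (lt b' a').
    { destruct Hbb as [->|H1]; destruct Hla as [<-|H2]; eauto. }
    split; auto. right; auto.
  - assert (2*p+j < 2*n+i).
    { destruct (lt_eq_lt_dec (2*p+j) (2*n+i)) as [[H|H]|H]; auto; exfalso.
      - rewrite H in Hb. rewrite (succn_uniq _ _ _ _ Hb Ha) in Hba. eapply irr; eauto.
      - eapply asym. apply Hba. eapply succn_lt; eauto. }
    split.
    + eapply succn_le; eauto. lia.
    + intro He. specialize (Hev He). eapply succn_lt; eauto. lia.
  - exfalso.
    assert (le m a).
    { right. assert (Hmb : le m b) by (eapply succn_le with (j := 0); eauto; [reflexivity|lia]).
      destruct Hmb as [->|Hmb]. exact Hba. exact (trans _ _ _ Hmb Hba). }
    destruct (succn_between l (2*n+i) a m Ha (or_intror Hlm) H) as [r [_ Hr]].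
    destruct r. simpl in Hr. subst. eapply irr; eauto.
    destruct Hr as [c [_ Hc]]. exact (zl_nosucc _ _ Hm Hc).
Qed.


Lemma top_nosucc w b : is_top lt w -> (forall b, lt b w -> countable_below lt b) ->
  ~ countable_below lt w -> ~ is_succ_of lt b w.
Proof.
  intros Ht Hc Hn [Hbw Hs]. apply Hn. destruct (Hc b Hbw) as [e He].
  exists (fun n => match n with 0 => b | S k => e k end).
  intros c Hcw. destruct (tri c b) as [H|[H|H]].
  - destruct (He c H) as [k Hk]. now exists (S k).
  - now exists 0.
  - exfalso. apply (Hs c). auto.
Qed.

Lemma top_nonzero w : ~ countable_below lt w -> ~ is_zero lt w.
Proof.
  intros Hn Hz. apply Hn. exists (fun _ => w). intros c Hc. exfalso. exact (Hz c Hc).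
Qed.

Lemma nonzero_ex b : ~ is_zero lt b -> exists c, lt c b.
Proof.
  intro H. apply NNPP. intro H'. apply H. intros c Hc. apply H'. eauto.
Qed.

Section FIsec.
Variable S0 : list nat -> Prop.
Inductive FI : O -> list nat -> Prop :=
| fz b t : is_zero lt b -> clTr S0 t -> FI b t
| fs b c t : is_succ_of lt c b -> Diie (FI c) t -> FI b t
| fl b t : is_limit lt b -> (forall c, lt c b -> FI c t) -> FI b t.

Lemma FI_IsDiter : IsDiter lt S0 FI.
Proof.
  intro b. split; [|split].
  - intros Hz t. split.
    + intro H. inversion H; subst; auto.
      * exfalso. exact (Hz c (proj1 H0)).
      * exfalso. exact (proj1 H0 Hz).
    + intro H. now apply fz.
  - intros c Hc t. split.
    + intro H. inversion H; subst.
      * exfalso. exact (H0 c (proj1 Hc)).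
      * rewrite (succ_uniq1 _ _ _ Hc H0). auto.
      * exfalso. apply (proj2 H0). eauto.
    + intro H. eapply fs; eauto.
  - intros Hl t. split.
    + intro H. inversion H; subst; auto.
      * exfalso. exact (proj1 Hl H0).
      * exfalso. apply (proj2 Hl). eauto.
    + intro H. now apply fl.
Qed.

Lemma Dpow_FI a t : Dpow lt S0 a t -> FI a t.
Proof. intro H. apply H. apply FI_IsDiter. Qed.

Lemma FI_closed b s t : FI b s -> prefix t s -> FI b t.
Proof.
  revert s t. induction b as [b IH] using (well_founded_ind wf). intros s t H Hp.
  inversion H; subst.
  - apply fz; auto. destruct H1 as [u [Hu Hu']]. exists u. split; auto. eapply prefix_trans; eauto.
  - eapply fs; eauto. eapply Diie_closed; eauto.
  - apply fl; auto. intros c Hc. eapply IH; eauto.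
Qed.

Lemma FI_dec b : forall c t, lt c b -> FI b t -> FI c t.
Proof.
  induction b as [b IH] using (well_founded_ind wf). intros c t Hcb H.
  inversion H; subst.
  - exfalso. exact (H0 c Hcb).
  - destruct H1 as [[s [Hs Hp]] _]. assert (Hc0 : FI c0 t) by (eapply FI_closed; eauto).
    destruct (tri c c0) as [H2|[<-|H2]]; auto.
    + exact (IH c0 (proj1 H0) c t H2 Hc0).
    + exfalso. apply (proj2 H0 c). auto.
  - auto.
Qed.

Lemma FI_le b c t : le c b -> FI b t -> FI c t.
Proof. intros [->|H]; auto. apply FI_dec; auto. Qed.

Lemma FI_after_finite b : finite_set (FI b) -> forall g t, lt b g -> ~ FI g t.
Proof.
  intros Hf g. induction g as [g IH] using (well_founded_ind wf). intros t Hbg H.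
  inversion H; subst.
  - exact (H0 b Hbg).
  - assert (Hcb : le b c).
    { destruct (tri b c) as [H2|[H2|H2]]. right; auto. left; auto.
      exfalso. apply (proj2 H0 b). auto. }
    apply (Diie_finite_empty (FI c)) with t; auto.
    eapply finite_sub; [|exact Hf]. intros s Hs. eapply FI_le; eauto.
  - destruct (classic (exists c, lt b c /\ lt c g)) as [[c [H2 H3]]|Hn].
    + apply (IH c H3 t H2). auto.
    + apply (proj2 H0). exists b. split; auto. intros c Hc. apply Hn. eauto.
Qed.

End FIsec.

Lemma FI_mono (S1 S2 : list nat -> Prop) : (forall t, clTr S1 t -> clTr S2 t) ->
  forall b t, FI S1 b t -> FI S2 b t.
Proof.
  intros HS b. induction b as [b IH] using (well_founded_ind wf). intros t H.
  inversion H; subst.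
  - apply fz; auto.
  - eapply fs. exact H0. eapply Diie_mono; [|exact H1]. intros s Hs. apply IH; [apply H0|exact Hs].
  - apply fl; auto.
Qed.

Lemma FI_h h (B B' : list nat -> Prop) :
  (forall s, B s <-> exists s', B' s' /\ s = h ++ s') ->
  forall b t, FI B b t -> FI B' b (skipn (length h) t) /\ prefix t (h ++ skipn (length h) t).
Proof.
  intros HB b. induction b as [b IH] using (well_founded_ind wf). intros t H.
  inversion H; subst.
  - destruct H1 as [s [Hs Hp]]. apply HB in Hs. destruct Hs as [s' [Hs' ->]].
    destruct (K_lem _ _ _ Hp) as [K1 K2]. split; auto. apply fz; auto. exists s'; auto.
  - destruct H1 as [_ [g [Hg Hinc]]].
    assert (Hw : forall k, exists w, FI B' c w /\ prefix (g k) (h ++ w)).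
    { intro k. destruct (Hg k) as [[s [Hs Hp]] _].
      destruct (IH c (proj1 H0) s Hs) as [I1 I2]. exists (skipn (length h) s). split; auto.
      eapply prefix_trans; eauto. }
    destruct (Hs_lem h (FI B' c) t g (fun k => proj2 (Hg k)) Hinc Hw) as [R1 R2].
    split; auto. eapply fs; eauto.
  - destruct (nonzero_ex b (proj1 H0)) as [c0 Hc0].
    split.
    + apply fl; auto. intros c Hc. apply (IH c Hc). auto.
    + apply (IH c0 Hc0). auto.
Qed.

Lemma FI_fork (f : nat -> list nat) (Bn : nat -> list nat -> Prop) (B : list nat -> Prop) :
  forking f ->
  (forall s, B s <-> exists n s', Bn n s' /\ s = f n ++ s') ->
  forall b t, FI B b t -> t <> [] ->
    exists n, FI (Bn n) b (skipn (length (f n)) t) /\ prefix t (f n ++ skipn (length (f n)) t).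
Proof.
  intros [Hf1 Hf2] HB b. induction b as [b IH] using (well_founded_ind wf). intros t H Ht.
  assert (Hhd : forall n m u v, prefix t (f n ++ u) -> prefix t (f m ++ v) -> n = m).
  { intros n m u v H1 H2. destruct (Nat.eq_dec n m) as [E|E]; auto. exfalso. apply (Hf2 n m E).
    pose proof (hd_prefix _ _ Ht H1) as E1. pose proof (hd_prefix _ _ Ht H2) as E2.
    assert (A1 := Hf1 n). assert (A2 := Hf1 m).
    destruct (f n); [congruence|]. destruct (f m); [congruence|]. simpl in *. congruence. }
  inversion H; subst.
  - destruct H1 as [s [Hs Hp]]. apply HB in Hs. destruct Hs as [n [s' [Hs' ->]]].
    destruct (K_lem _ _ _ Hp) as [K1 K2]. exists n. split; auto. apply fz; auto. exists s'; auto.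
  - destruct H1 as [[s0 [Hs0 Hp0]] [g [Hg Hinc]]].
    assert (Hn : forall k, exists n w, FI (Bn n) c w /\ prefix (g k) (f n ++ w)).
    { intro k. destruct (Hg k) as [[s [Hs Hp]] Htg].
      assert (Hsn : s <> []).
      { intro E. subst. apply Ht. apply prefix_nil_inv. eapply prefix_trans; eauto. }
      destruct (IH c (proj1 H0) s Hs Hsn) as [n [I1 I2]]. exists n, (skipn (length (f n)) s).
      split; auto. eapply prefix_trans; eauto. }
    destruct (Hn 0) as [n0 [w0 [_ Hw0]]].
    assert (Hw : forall k, exists w, FI (Bn n0) c w /\ prefix (g k) (f n0 ++ w)).
    { intro k. destruct (Hn k) as [n [w [Hw1 Hw2]]].
      assert (n = n0).
      { eapply Hhd. eapply prefix_trans; [apply (proj2 (Hg k))|exact Hw2].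
        eapply prefix_trans; [apply (proj2 (Hg 0))|exact Hw0]. }
      subst. eauto. }
    destruct (Hs_lem (f n0) (FI (Bn n0) c) t g (fun k => proj2 (Hg k)) Hinc Hw) as [R1 R2].
    exists n0. split; auto. eapply fs; eauto.
  - destruct (nonzero_ex b (proj1 H0)) as [c0 Hc0].
    destruct (IH c0 Hc0 t (H1 c0 Hc0) Ht) as [n0 [I1 I2]].
    exists n0. split; auto. apply fl; auto. intros c Hc.
    destruct (IH c Hc t (H1 c Hc) Ht) as [n [J1 J2]].
    assert (n = n0) by (eapply Hhd; eauto). subst. auto.
Qed.


Hypothesis Htop : forall w, is_top lt w ->
  (forall b, lt b w -> countable_below lt b) /\ ~ countable_below lt w.

Inductive BI : O -> (list nat -> Prop) -> Prop :=
| bi_zero a B : is_zero lt a -> (forall s, B s <-> s = []) -> BI a B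
| bi_odd_down a b B : is_odd lt a -> lt b a -> BI b B -> BI a B
| bi_odd_h a c B' h B : is_odd lt a -> is_succ_of lt c a -> BI c B' ->
    (forall s, B s <-> exists s', B' s' /\ s = h ++ s') -> BI a B
| bi_even_down a b B : is_even lt a -> ~ is_zero lt a -> ~ is_top lt a -> lt b a -> BI b B -> BI a B
| bi_fork a f Bn bs B : is_even lt a -> ~ is_zero lt a -> ~ is_top lt a -> forking f ->
    (forall n, lt (bs n) a) -> (forall n, BI (bs n) (Bn n)) ->
    (forall s, B s <-> exists n s', Bn n s' /\ s = f n ++ s') -> BI a B
| bi_top a b B : is_top lt a -> lt b a -> BI b B -> BI a B.

Lemma top_not_odd a : is_top lt a -> is_odd lt a -> False.
Proof.
  intros Ht Ho. destruct (odd_succ a Ho) as [b Hb]. destruct (Htop a Ht) as [H1 H2].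
  exact (top_nosucc a b Ht H1 H2 Hb).
Qed.

Lemma BI_IsBroom : IsBroom lt BI.
Proof.
  intros a B. split; [|split; [|split]].
  - intro Hz. split.
    + intro H. inversion H; subst; auto; exfalso.
      * exact (Hz b H1).
      * exact (Hz c (proj1 H1)).
      * exact (Hz b H3).
      * exact (Hz (bs 0) (H4 0)).
      * exact (Hz b H1).
    + intro H. now apply bi_zero.
  - intros c Ho Hc. split.
    + intro H. inversion H; subst.
      * exfalso. exact (H0 c (proj1 Hc)).
      * left. eauto.
      * right. rewrite (succ_uniq1 _ _ _ Hc H1). eauto.
      * exfalso. eapply not_even_odd; eauto.
      * exfalso. eapply not_even_odd; eauto.
      * exfalso. eapply top_not_odd; eauto.
    + intros [[b [Hb HB]]|[h [B' [HB' HB]]]].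
      * eapply bi_odd_down; eauto.
      * eapply bi_odd_h; eauto.
  - intros He Hnz Hnt. split.
    + intro H. inversion H; subst.
      * contradiction.
      * exfalso. eapply not_even_odd; eauto.
      * exfalso. eapply not_even_odd; eauto.
      * left. eauto.
      * right. exists f, Bn. split; auto. split; auto. intro n. exists (bs n). auto.
      * contradiction.
    + intros [[b [Hb HB]]|[f [Bn [Hf [Hb HB]]]]].
      * eapply bi_even_down; eauto.
      * set (bs := fun n => proj1_sig (constructive_indefinite_description _ (Hb n))).
        apply (bi_fork a f Bn bs B); auto.
        -- intro n. exact (proj1 (proj2_sig (constructive_indefinite_description _ (Hb n)))).
        -- intro n. exact (proj2 (proj2_sig (constructive_indefinite_description _ (Hb n)))).
  - intro Ht. split.
    + intro H. inversion H; subst.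
      * exfalso. destruct (Htop a Ht) as [_ H2]. exact (top_nonzero a H2 H0).
      * eauto.
      * exfalso. eapply top_not_odd; eauto.
      * eauto.
      * contradiction.
      * eauto.
    + intros [b [Hb HB]]. eapply bi_top; eauto.
Qed.

Lemma BI_antichain a B : BI a B -> forall s s', B s -> B s' -> prefix s s' -> s = s'.
Proof.
  induction 1; intros s s' Hs Hs' Hp; auto.
  - apply H0 in Hs. apply H0 in Hs'. congruence.
  - apply H2 in Hs. apply H2 in Hs'. destruct Hs as [u [Hu ->]]. destruct Hs' as [u' [Hu' ->]].
    f_equal. apply IHBI; auto. eapply prefix_app_inv; eauto.
  - apply H6 in Hs. apply H6 in Hs'. destruct Hs as [n [u [Hu ->]]]. destruct Hs' as [m [u' [Hu' ->]]].
    destruct H2 as [Hf1 Hf2].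
    assert (n = m).
    { destruct (Nat.eq_dec n m) as [E|E]; auto. exfalso. apply (Hf2 n m E).
      assert (A1 := Hf1 n). assert (A2 := Hf1 m). destruct Hp as [r Hr].
      destruct (f n); [congruence|]. destruct (f m); [congruence|]. simpl in *. congruence. }
    subst. f_equal. apply (H5 m); auto. eapply prefix_app_inv; eauto.
Qed.

Definition Claim a B := forall a', prime_of lt a a' ->
  finite_set (FI B a') /\ (is_even lt a -> forall t, FI B a' t -> t = []).

Lemma claim_down a b B : lt b a -> Claim b B -> Claim a B.
Proof.
  intros Hba HP a' Ha'. destruct (prime_exists b) as [b' Hb'].
  destruct (HP b' Hb') as [Fin _]. destruct (D_lem a a' b b' Ha' Hb' Hba) as [Dle Dlt].
  split.
  - eapply finite_sub; [|exact Fin]. intros t Ht. eapply FI_le; eauto.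
  - intros He t Ht. exfalso. exact (FI_after_finite B b' Fin a' t (Dlt He) Ht).
Qed.

Lemma finite_root (X : list nat -> Prop) : (forall t, X t -> t = []) -> finite_set X.
Proof. intro H. exists [[]]. intros s Hs. rewrite (H s Hs). now left. Qed.

Lemma BI_claim a B : BI a B -> Claim a B.
Proof.
  induction 1.
  - intros a' [l [n [i [Hl [Hi [Ha Ha']]]]]].
    destruct (2*n+i) eqn:E.
    + assert (n = 0) by lia. subst n. simpl in Ha, Ha'. subst.
      assert (Hr : forall t, FI B l t -> t = []).
      { intros t Ht. apply (proj1 (FI_IsDiter B l) H t) in Ht. destruct Ht as [s [Hs Hp]].
        apply H0 in Hs. subst. now apply prefix_nil_inv. }
      split; auto. now apply finite_root.
    + exfalso. destruct Ha as [c [_ Hc]]. exact (H c (proj1 Hc)).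
  - eapply claim_down; eauto.
  - intros a' Ha'. destruct Ha' as [l [n [i [Hl [Hi [Ha Ha']]]]]].
    pose proof H as Hodd. destruct H as [l2 [n2 [Hl2 Hd]]].
    destruct (succn_decomp_uniq _ _ _ _ _ Hl Hl2 Ha Hd) as [<- E].
    assert (i = 1) by lia. assert (n2 = n) by lia. subst i n2.
    rewrite Nat.add_1_r in Hd. destruct Hd as [c0 [Hc0 Hs]].
    rewrite <- (succ_uniq1 _ _ _ Hs H0) in *.
    assert (Hp : prime_of lt c0 a').
    { exists l, n, 0. repeat split; auto. now rewrite Nat.add_0_r. }
    destruct (IHBI a' Hp) as [[L HL] _]. split.
    + exists (flat_map (fun w => prefixes (h ++ w)) L). intros t Ht.
      destruct (FI_h h B B' H2 a' t Ht) as [R1 R2]. apply in_flat_map.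
      exists (skipn (length h) t). split; auto. now apply in_prefixes.
    + intros He. exfalso. apply (not_even_odd a); auto.
  - eapply claim_down; eauto.
  - intros a' Ha'.
    assert (Hr : forall t, FI B a' t -> t = []).
    { intros t Ht. destruct (classic (t = [])) as [E|E]; auto. exfalso.
      destruct (FI_fork f Bn B H2 H6 a' t Ht E) as [n [R1 _]].
      destruct (prime_exists (bs n)) as [b' Hb'].
      destruct (H5 n b' Hb') as [Fin _]. destruct (D_lem a a' (bs n) b' Ha' Hb' (H3 n)) as [_ Dlt].
      exact (FI_after_finite (Bn n) b' Fin a' _ (Dlt H) R1). }
    split; auto. now apply finite_root.
  - eapply claim_down; eauto.
Qed.


Lemma pinf_trans t u x : prefix t u -> prefix_inf u x -> prefix_inf t x.
Proof.
  intros [r ->] H i Hi. rewrite <- H by (rewrite length_app; lia). now rewrite app_nth1.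
Qed.

Lemma pinf_comp t u x : prefix_inf t x -> prefix_inf u x -> prefix t u \/ prefix u t.
Proof.
  assert (G : forall t u, length t <= length u -> prefix_inf t x -> prefix_inf u x -> prefix t u).
  { intros t' u' Hl Ht Hu. exists (skipn (length t') u').
    assert (E : firstn (length t') u' = t').
    { apply nth_ext with 0 0.
      - rewrite length_firstn. lia.
      - intros i Hi. rewrite length_firstn in Hi. rewrite nth_firstn.
        destruct (Nat.ltb_spec i (length t')); [|lia].
        rewrite Ht, Hu by lia. reflexivity. }
    rewrite <- E at 2. rewrite length_firstn. replace (Init.Nat.min (length t') (length u')) with (length t') by lia.
    symmetry. rewrite <- E at 1. symmetry. now rewrite firstn_skipn. }
  intros Ht Hu. destruct (Nat.le_ge_cases (length t) (length u)).
  - left. auto.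
  - right. auto.
Qed.

Lemma ext_cl (B : list nat -> Prop) (A : (nat -> nat) -> Prop) :
  (forall s s', B s -> B s' -> prefix s s' -> s = s') -> BroomExt B A ->
  forall t, clTr (Diie_inf A) t -> clTr B t.
Proof.
  intros HAC [f [nu [Hf HA]]] t0 [t [Ht Hp0]].
  cut (clTr B t). { intros [s [Hs Hp]]. exists s. split; auto. eapply prefix_trans; eauto. }
  destruct Ht as [_ [g [Hg Hinc]]].
  destruct (Hg 0) as [[x0 [HA0 Hx0]] Ht0]. destruct (Hg 1) as [[x1 [HA1 Hx1]] Ht1].
  apply HA in HA0. destruct HA0 as [s0 [n0 [HB0 E0]]].
  apply HA in HA1. destruct HA1 as [s1 [n1 [HB1 E1]]].
  assert (Htx0 := pinf_trans _ _ _ Ht0 Hx0). assert (Htx1 := pinf_trans _ _ _ Ht1 Hx1).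
  assert (Hsx : forall s n x, B s -> (forall i, x i = app_inf (s ++ f s n) (nu s n) i) ->
     prefix_inf s x /\ x (length s) = hd 0 (f s n)).
  { intros s n x Hs E. assert (Hne := proj1 (Hf s Hs) n). split.
    - intros i Hi. rewrite E. unfold app_inf. rewrite length_app.
      destruct (Nat.ltb_spec i (length s + length (f s n))); [|lia]. now rewrite app_nth1.
    - rewrite E. unfold app_inf. rewrite length_app.
      destruct (f s n) eqn:Ef; [congruence|]. simpl.
      destruct (Nat.ltb_spec (length s) (length s + S (length l))); [|lia].
      rewrite app_nth2, Nat.sub_diag by lia. reflexivity. }
  destruct (Hsx _ _ _ HB0 E0) as [Hs0 Hh0]. destruct (Hsx _ _ _ HB1 E1) as [Hs1 Hh1].
  destruct (classic (prefix t s0)) as [P0|P0]. { exists s0; auto. }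
  destruct (classic (prefix t s1)) as [P1|P1]. { exists s1; auto. }
  exfalso.
  assert (Q0 : prefix s0 t) by (destruct (pinf_comp _ _ _ Htx0 Hs0); tauto).
  assert (Q1 : prefix s1 t) by (destruct (pinf_comp _ _ _ Htx1 Hs1); tauto).
  assert (s0 = s1).
  { destruct (prefix_comp _ _ _ Q0 Q1); [apply HAC|symmetry; apply HAC]; auto. }
  subst s1.
  assert (Hlen : length s0 < length t).
  { destruct Q0 as [r Er]. destruct r. rewrite app_nil_r in Er. subst. exfalso. apply P0, prefix_refl.
    subst. rewrite length_app. simpl. lia. }
  assert (n0 = n1).
  { destruct (Nat.eq_dec n0 n1) as [E|E]; auto. exfalso. apply (proj2 (Hf s0 HB0) n0 n1 E).
    rewrite <- Hh0, <- Hh1, <- Htx0, <- Htx1 by auto. reflexivity. }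
  subst n1.
  assert (Hg1 : prefix_inf (g 1) x0). { intros i Hi. rewrite Hx1 by auto. now rewrite E0, E1. }
  destruct (Hinc 0 1 ltac:(lia)) as [[I1 I2] _].
  destruct (pinf_comp _ _ _ Hx0 Hg1); tauto.
Qed.

Lemma final a : (exists a', prime_of lt a a') /\
  forall a', prime_of lt a a' ->
    (forall B, Broom lt a B ->
       finite_set (Dpow lt B a') /\
       (is_even lt a -> empty_or_root (Dpow lt B a'))) /\
    (forall A, BroomA lt a A ->
       finite_set (Dpow lt (Diie_inf A) a') /\
       (is_even lt a -> empty_or_root (Dpow lt (Diie_inf A) a'))).
Proof.
  split. apply prime_exists. intros a' Ha'.
  assert (Hfin : forall S B, BI a B -> (forall t, clTr S t -> clTr B t) ->
    finite_set (Dpow lt S a') /\ (is_even lt a -> empty_or_root (Dpow lt S a'))).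
  { intros S B HB HS. destruct (BI_claim a B HB a' Ha') as [Fin Ev].
    assert (Sub : forall t, Dpow lt S a' t -> FI B a' t).
    { intros t Ht. apply (FI_mono S B HS). now apply Dpow_FI. }
    split.
    - eapply finite_sub; eauto.
    - intros He. destruct (classic (Dpow lt S a' [])) as [H0|H0].
      + right. intro s. split.
        * intro Hs. apply (Ev He). now apply Sub.
        * intros ->. auto.
      + left. intros s Hs. apply H0. rewrite <- (Ev He s (Sub s Hs)). auto. }
  split.
  - intros B HB. apply (Hfin B B (HB BI BI_IsBroom)). auto.
  - intros A [B [HB HE]]. assert (HBI := HB BI BI_IsBroom).
    apply (Hfin (Diie_inf A) B HBI). apply ext_cl; auto. eapply BI_antichain; eauto.
Qed.

End Ords.


Theorem lemma7p1 (O : Type) (lt : O -> O -> Prop) (HO : IsOmega1Plus1 lt) (a : O) :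
  (exists a', prime_of lt a a') /\
  forall a', prime_of lt a a' ->
    (forall B, Broom lt a B ->
       finite_set (Dpow lt B a') /\
       (is_even lt a -> empty_or_root (Dpow lt B a'))) /\
    (forall A, BroomA lt a A ->
       finite_set (Dpow lt (Diie_inf A) a') /\
       (is_even lt a -> empty_or_root (Dpow lt (Diie_inf A) a'))).
Proof.
  destruct HO as [irr [trans [tri [wf [w [Hw [Hc Hnc]]]]]]].
  apply (final O lt irr trans tri wf).
  intros a0 Ha0. assert (a0 = w).
  { destruct (Ha0 w) as [E|L]; auto. destruct (Hw a0) as [E|L2]; auto.
    exfalso. exact (irr a0 (trans _ _ _ L2 L)). }
  subst. auto.
Qed.
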